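(* Consider a market with $M$ consumers $\mathcal{M}=\{1,\dots,M\}$ and $N$ suppliers $\mathcal{N}=\{1,\dots,N\}$, constants $d_0>0$, $\kappa_0>0$ with $Md_0<N\kappa_0$. Assume: for each $i\in\mathcal{M}$, $U_i$ is concave, strictly increasing and continuously differentiable on $[d_0,\infty)$ with $U_i(d_0)=0$; for each $i\in\mathcal{N}$, $C_i:\mathbb{R}\to\mathbb{R}$ is convex, strictly increasing and continuously differentiable with $C_i(s)\ge 0$ for $s\ge 0$ and $C_i(s)=0$ for $s\le 0$. For $\theta\ge 0$ and $p>0$ let $D(\theta,p)=d_0+\theta/p$ and $S(\theta,p)=\kappa_0-\theta/p$. For a price $\mu>0$ define the price-taking payoffs $$\pi_d^i(\theta_d^i,\mu)=U_i(D(\theta_d^i,\mu))-\mu D(\theta_d^i,\mu),\ i\in\mathcal{M},\qquad \pi_s^i(\theta_s^i,\mu)=\mu S(\theta_s^i,\mu)-C_i(S(\theta_s^i,\mu)),\ i\in\mathcal{N}.$$ Then there exist $\boldsymbol{\theta}_d^*=(\theta_d^{1*},\dots,\theta_d^{M*})\in\mathbb{R}_+^M$, $\boldsymbol{\theta}_s^*=(\theta_s^{1*},\dots,\theta_s^{N*})\in\mathbb{R}_+^N$ and $\mu>0$ such that (i) $\pi_d^i(\theta_d^{i*},\mu)\ge \pi_d^i(\theta_d^i,\mu)$ for all $\theta_d^i\ge 0$ and all $i\in\mathcal{M}$; (ii) $\pi_s^i(\theta_s^{i*},\mu)\ge \pi_s^i(\theta_s^i,\mu)$ for all $\theta_s^i\ge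 0$ and all $i\in\mathcal{N}$; (iii) $\mu=\dfrac{\sum_{i=1}^M\theta_d^{i*}+\sum_{i=1}^N\theta_s^{i*}}{N\kappa_0-Md_0}$. Moreover, the allocation $d_i^*=D(\theta_d^{i*},\mu)$, $i\in\mathcal{M}$, and $s_i^*=S(\theta_s^{i*},\mu)$, $i\in\mathcal{N}$, is an optimal solution of the welfare maximization problem $$\max_{\mathbf{d},\mathbf{s}}\ \sum_{i=1}^M U_i(d_i)-\sum_{i=1}^N C_i(s_i)\quad\text{s.t.}\quad \sum_{i=1}^M d_i=\sum_{i=1}^N s_i,\ \ 0\le s_i\le\kappa_0\ (i\in\mathcal{N}),\ \ d_i\ge d_0\ (i\in\mathcal{M}).$$
   Context: $d_0$ is the common minimum inelastic demand of each consumer and $\kappa_0$ the common capacity of each supplier. Consumer $i$ submits a scalar $\theta_d^i\ge0$ (demand bid $D(\theta_d^i,p)$) and supplier $i$ submits a scalar $\theta_s^i\ge 0$ (supply offer $S(\theta_s^i,p)$); the stated price in (iii) is the unique $p>0$ equating total demand and total supply. *)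

(* Defs.v *)
From Stdlib Require Import Reals.
From Coquelicot Require Import Coquelicot.
Open Scope R_scope.

(* rsum n f = f 0 + ... + f (n-1)  (indices 0..n-1 stand for 1..n). *)
Fixpoint rsum (n : nat) (f : nat -> R) : R :=
  match n with
  | O => 0
  | S k => rsum k f + f k
  end.

Definition Dem (d0 theta p : R) : R := d0 + theta / p.
Definition Sup (k0 theta p : R) : R := k0 - theta / p.

Definition pay_d (d0 : R) (Ui : R -> R) (theta mu : R) : R :=
  Ui (Dem d0 theta mu) - mu * Dem d0 theta mu.
Definition pay_s (k0 : R) (Ci : R -> R) (theta mu : R) : R :=
  mu * Sup k0 theta mu - Ci (Sup k0 theta mu).

Definition concave_on_Ici (f : R -> R) (a : R) : Prop :=
  forall x y t, a <= x -> a <= y -> 0 <= t <= 1 ->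
    t * f x + (1 - t) * f y <= f (t * x + (1 - t) * y).

Definition convex_R (f : R -> R) : Prop :=
  forall x y t, 0 <= t <= 1 ->
    f (t * x + (1 - t) * y) <= t * f x + (1 - t) * f y.

Definition strict_incr_Ici (f : R -> R) (a : R) : Prop :=
  forall x y, a <= x -> x < y -> f x < f y.

Definition C1_on_Ici (f : R -> R) (a : R) : Prop :=
  exists f' : R -> R,
    (forall x, a <= x ->
       filterlim (fun y => (f y - f x) / (y - x))
         (within (fun y => a <= y /\ y <> x) (locally x)) (locally (f' x))) /\
    (forall x, a <= x ->
       filterlim f' (within (fun y => a <= y) (locally x)) (locally (f' x))).

Definition C1_R (f : R -> R) : Prop :=
  exists f' : R -> R,
    (forall x, is_derive f x (f' x)) /\ (forall x, continuous f' x).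

Definition feasible (M N : nat) (d0 k0 : R) (d s : nat -> R) : Prop :=
  rsum M d = rsum N s /\
  (forall i, (i < N)%nat -> 0 <= s i <= k0) /\
  (forall i, (i < M)%nat -> d0 <= d i).

Definition welfare (M N : nat) (U C : nat -> R -> R) (d s : nat -> R) : R :=
  rsum M (fun i => U i (d i)) - rsum N (fun i => C i (s i)).

(* Main.v *)
Require Import Defs.
From Stdlib Require Import Reals Lra Lia Arith.
From Stdlib Require Import IndefiniteDescription.
From Coquelicot Require Import Coquelicot.
Open Scope R_scope.

Lemma flim_eps (f : R -> R) (D : R -> Prop) x l :
  filterlim f (within D (locally x)) (locally l) ->
  forall eps, 0 < eps -> exists del, 0 < del /\
    forall y, D y -> Rabs (y - x) < del -> Rabs (f y - l) < eps.
Proof.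
  intros H eps Heps.
  assert (Hl : locally l (fun z => Rabs (z - l) < eps)).
  { exists (mkposreal eps Heps). intros z Hz. exact Hz. }
  destruct (H _ Hl) as [[del Hd] Hdel].
  exists del; split; [exact Hd|]. intros y Dy Hy. exact (Hdel y Hy Dy).
Qed.

Lemma cont_eps (f : R -> R) x :
  continuous f x ->
  forall eps, 0 < eps -> exists del, 0 < del /\
    forall y, Rabs (y - x) < del -> Rabs (f y - f x) < eps.
Proof.
  intros H eps Heps.
  assert (Hl : locally (f x) (fun z => Rabs (z - f x) < eps)).
  { exists (mkposreal eps Heps). intros z Hz. exact Hz. }
  destruct (H _ Hl) as [[del Hd] Hdel].
  exists del; split; [exact Hd|]. intros y Hy. exact (Hdel y Hy).
Qed.

Lemma seg_grad (F : R -> R) d x L :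
  x <> d ->
  (forall eps, 0 < eps -> exists del, 0 < del /\ forall t, 0 < t <= 1 ->
     Rabs (t * (x - d)) < del ->
     Rabs ((F (d + t * (x - d)) - F d) / (t * (x - d)) - L) < eps) ->
  (forall t, 0 < t <= 1 -> t * (F x - F d) <= F (d + t * (x - d)) - F d) ->
  F x - F d <= L * (x - d).
Proof.
  intros Hxd Hlim Hc.
  destruct (Rle_or_lt (F x - F d) (L * (x - d))) as [h|h]; [exact h|].
  exfalso.
  set (g := (F x - F d) / (x - d)).
  assert (Hxd' : x - d <> 0) by lra.
  assert (Hgeq : forall t, 0 < t <= 1 ->
     Rabs (g - L) <= Rabs ((F (d + t * (x - d)) - F d) / (t * (x - d)) - L)).
  { intros t Ht. specialize (Hc t Ht).
    destruct (Rlt_or_le d x) as [hx|hx].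
    - assert (g > L).
      { unfold g. apply Rmult_lt_reg_r with (x - d); [lra|].
        replace ((F x - F d) / (x - d) * (x - d)) with (F x - F d) by (field; lra).
        lra. }
      assert (Hq : g <= (F (d + t * (x - d)) - F d) / (t * (x - d))).
      { unfold g. apply Rmult_le_reg_r with (t * (x - d)); [nra|].
        replace ((F (d + t * (x - d)) - F d) / (t * (x - d)) * (t * (x - d)))
          with (F (d + t * (x - d)) - F d) by (field; lra).
        replace ((F x - F d) / (x - d) * (t * (x - d)))
          with (t * (F x - F d)) by (field; lra). lra. }
      rewrite !Rabs_right; lra.
    - assert (hx' : x < d) by lra.
      assert (g < L).
      { unfold g. apply Rmult_lt_reg_r with (d - x); [lra|].
        replace ((F x - F d) / (x - d) * (d - x)) with (- (F x - F d)) by (field; lra).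
        lra. }
      assert (Hq : (F (d + t * (x - d)) - F d) / (t * (x - d)) <= g).
      { unfold g. apply Rmult_le_reg_r with (t * (d - x)); [nra|].
        replace ((F (d + t * (x - d)) - F d) / (t * (x - d)) * (t * (d - x)))
          with (- (F (d + t * (x - d)) - F d)) by (field; lra).
        replace ((F x - F d) / (x - d) * (t * (d - x)))
          with (- (t * (F x - F d))) by (field; lra). lra. }
      rewrite !Rabs_left; lra. }
  assert (Hgl : 0 < Rabs (g - L)).
  { apply Rabs_pos_lt. intro E.
    assert (g = L) by lra. unfold g in H.
    assert (F x - F d = L * (x - d)).
    { rewrite <- H. field. exact Hxd'. } lra. }
  destruct (Hlim _ Hgl) as [del [Hdel Hd]].
  set (t := Rmin 1 (del / (2 * Rabs (x - d)))).
  assert (Hax : 0 < Rabs (x - d)) by (apply Rabs_pos_lt; exact Hxd').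
  assert (Ht : 0 < t <= 1).
  { unfold t. split. apply Rmin_glb_lt; [lra|]. apply Rdiv_lt_0_compat; lra.
    apply Rmin_l. }
  assert (Hsm : Rabs (t * (x - d)) < del).
  { rewrite Rabs_mult, (Rabs_right t) by lra.
    assert (t <= del / (2 * Rabs (x - d))) by apply Rmin_r.
    apply Rle_lt_trans with (del / (2 * Rabs (x - d)) * Rabs (x - d)).
    apply Rmult_le_compat_r; lra.
    replace (del / (2 * Rabs (x - d)) * Rabs (x - d)) with (del / 2) by (field; lra).
    lra. }
  specialize (Hd t Ht Hsm). specialize (Hgeq t Ht). lra.
Qed.

Definition supR (P : R -> Prop) : R := real (Lub_Rbar P).

Lemma supR_props (P : R -> Prop) a b :
  P a -> (forall x, P x -> x <= b) ->
  (forall x, P x -> x <= supR P) /\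
  (forall y, (forall x, P x -> x <= y) -> supR P <= y) /\
  (forall y, y < supR P -> exists x, P x /\ y < x).
Proof.
  intros Pa Hb.
  destruct (Lub_Rbar_correct P) as [Hub Hlub].
  unfold supR.
  destruct (Lub_Rbar P) as [l| |] eqn:E.
  - simpl. split; [|split].
    + intros x Px. exact (Hub x Px).
    + intros y Hy. apply (Hlub (Finite y)). intros x Px. exact (Hy x Px).
    + intros y Hy. destruct (Classical_Prop.classic (exists x, P x /\ y < x)) as [h|h]; [exact h|].
      exfalso.
      assert (Rbar_le l y).
      { apply (Hlub (Finite y)). intros x Px. simpl.
        destruct (Rle_or_lt x y) as [h1|h1]; [exact h1|]. exfalso; apply h; eauto. }
      simpl in H. lra.
  - exfalso. specialize (Hlub (Finite b)).
    assert (Rbar_le p_infty b). { apply Hlub. intros x Px. exact (Hb x Px). }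
    simpl in H; exact H.
  - exfalso. specialize (Hub a Pa). simpl in Hub. exact Hub.
Qed.

Lemma choice_nat (P : nat -> (R -> R) -> Prop) :
  (forall i, exists f, P i f) -> exists g : nat -> R -> R, forall i, P i (g i).
Proof.
  intros H.
  exists (fun i => proj1_sig (constructive_indefinite_description _ (H i))).
  intros i. exact (proj2_sig (constructive_indefinite_description _ (H i))).
Qed.

Lemma rsum_ext n f g : (forall i, (i < n)%nat -> f i = g i) -> rsum n f = rsum n g.
Proof.
  induction n; simpl; intros H; [reflexivity|].
  rewrite IHn by (intros; apply H; lia). rewrite H by lia. reflexivity.
Qed.

Lemma rsum_le n f g : (forall i, (i < n)%nat -> f i <= g i) -> rsum n f <= rsum n g.
Proof.
  induction n; simpl; intros H; [lra|].
  assert (rsum n f <= rsum n g) by (apply IHn; intros; apply H; lia).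
  assert (f n <= g n) by (apply H; lia). lra.
Qed.

Lemma rsum_const n c : rsum n (fun _ => c) = INR n * c.
Proof.
  induction n; simpl rsum; [simpl; ring|]. rewrite IHn, S_INR. ring.
Qed.

Lemma rsum_lin n (a b : nat -> R) l :
  rsum n (fun i => a i + l * (b i - a i)) = rsum n a + l * (rsum n b - rsum n a).
Proof.
  induction n; simpl; [ring|]. rewrite IHn. ring.
Qed.

Lemma rsum_opp n f : rsum n (fun i => - f i) = - rsum n f.
Proof. induction n; simpl; [ring|]. rewrite IHn. ring. Qed.

Lemma rsum_affine n f a b : rsum n (fun i => a * f i + b) = a * rsum n f + INR n * b.
Proof.
  induction n; simpl rsum; [simpl; ring|]. rewrite IHn, S_INR. ring.
Qed.

Lemma rsum_ge_term n f i : (i < n)%nat -> (forall j, (j < n)%nat -> 0 <= f j) ->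
  f i <= rsum n f.
Proof.
  induction n; intros Hi H; [lia|]. simpl.
  assert (0 <= rsum n f).
  { clear IHn Hi. induction n; simpl; [lra|].
    assert (0 <= f n) by (apply H; lia).
    assert (0 <= rsum n f) by (apply IHn; intros; apply H; lia). lra. }
  destruct (Nat.eq_dec i n) as [->|Hne].
  - lra.
  - assert (f i <= rsum n f) by (apply IHn; [lia| intros; apply H; lia]).
    assert (0 <= f n) by (apply H; lia). lra.
Qed.

Fixpoint rmaxn (n : nat) (f : nat -> R) : R :=
  match n with
  | O => f O
  | S k => Rmax (rmaxn k f) (f k)
  end.

Lemma rmaxn_ge n f i : (i < n)%nat -> f i <= rmaxn n f.
Proof.
  induction n; intros Hi; [lia|]. simpl.
  destruct (Nat.eq_dec i n) as [->|Hne]. apply Rmax_r.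
  eapply Rle_trans; [apply IHn; lia| apply Rmax_l].
Qed.

Lemma rmaxn_wit n f : (0 < n)%nat -> exists i, (i < n)%nat /\ rmaxn n f = f i.
Proof.
  induction n; intros Hn; [lia|]. simpl.
  destruct n.
  - exists O. split; [lia|]. simpl. unfold Rmax; destruct Rle_dec; reflexivity.
  - destruct IHn as [i [Hi Ei]]; [lia|]. rewrite Ei.
    unfold Rmax; destruct Rle_dec.
    + exists (S n); split; [lia|reflexivity].
    + exists i; split; [lia|reflexivity].
Qed.

Lemma agg n (a : nat -> R -> R) (b : nat -> R) (Nb : R -> R -> Prop) :
  (forall d1 d2 mu, 0 < d1 <= d2 -> Nb d1 mu -> Nb d2 mu) ->
  (forall i, (i < n)%nat -> forall eps, 0 < eps -> exists del, 0 < del /\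
     forall mu, Nb del mu -> b i - eps <= a i mu) ->
  forall eps, 0 < eps -> exists del, 0 < del /\
     forall mu, Nb del mu -> rsum n b - eps <= rsum n (fun i => a i mu).
Proof.
  intros Hmon. induction n; intros H eps Heps.
  - exists 1. split; [lra|]. intros; simpl; lra.
  - destruct (IHn (fun i Hi => H i ltac:(lia)) (eps/2)) as [d1 [Hd1 H1]]; [lra|].
    destruct (H n ltac:(lia) (eps/2)) as [d2 [Hd2 H2]]; [lra|].
    exists (Rmin d1 d2). split. apply Rmin_glb_lt; lra.
    intros mu Hmu. simpl.
    assert (Hmin : 0 < Rmin d1 d2) by (apply Rmin_glb_lt; lra).
    specialize (H1 mu (Hmon _ _ mu (conj Hmin (Rmin_l _ _)) Hmu)).
    specialize (H2 mu (Hmon _ _ mu (conj Hmin (Rmin_r _ _)) Hmu)).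
    lra.
Qed.

Definition cwithin (f : R -> R) (D : R -> Prop) a :=
  forall eps, 0 < eps -> exists del, 0 < del /\
    forall y, D y -> Rabs (y - a) < del -> Rabs (f y - f a) < eps.

Lemma left_ge f D a eta m : cwithin f D a -> 0 < eta ->
  (forall y, a - eta < y < a -> D y /\ m <= f y) -> m <= f a.
Proof.
  intros Hc He H. destruct (Rle_or_lt m (f a)) as [h|h]; [exact h|exfalso].
  destruct (Hc (m - f a)) as [del [Hd Hy]]; [lra|].
  set (y := a - Rmin del eta / 2).
  assert (0 < Rmin del eta) by (apply Rmin_glb_lt; lra).
  assert (Rmin del eta <= del) by apply Rmin_l.
  assert (Rmin del eta <= eta) by apply Rmin_r.
  destruct (H y) as [Dy Hm]; [unfold y; lra|].
  specialize (Hy y Dy). assert (Rabs (y - a) < del).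
  { unfold y. rewrite Rabs_left by lra. lra. }
  specialize (Hy H3). apply Rabs_def2 in Hy. lra.
Qed.

Lemma right_le f D a eta m : cwithin f D a -> 0 < eta ->
  (forall y, a < y < a + eta -> D y /\ f y <= m) -> f a <= m.
Proof.
  intros Hc He H. destruct (Rle_or_lt (f a) m) as [h|h]; [exact h|exfalso].
  destruct (Hc (f a - m)) as [del [Hd Hy]]; [lra|].
  set (y := a + Rmin del eta / 2).
  assert (0 < Rmin del eta) by (apply Rmin_glb_lt; lra).
  assert (Rmin del eta <= del) by apply Rmin_l.
  assert (Rmin del eta <= eta) by apply Rmin_r.
  destruct (H y) as [Dy Hm]; [unfold y; lra|].
  specialize (Hy y Dy). assert (Rabs (y - a) < del).
  { unfold y. rewrite Rabs_right by lra. lra. }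
  specialize (Hy H3). apply Rabs_def2 in Hy. lra.
Qed.

Lemma cwithin_opp f D a : cwithin f D a -> cwithin (fun x => - f x) D a.
Proof.
  intros H eps He. destruct (H eps He) as [del [Hd Hy]]. exists del; split; auto.
  intros y Dy Hya. specialize (Hy y Dy Hya).
  replace (- f y - - f a) with (- (f y - f a)) by ring. rewrite Rabs_Ropp. exact Hy.
Qed.

Lemma left_le f D a eta m : cwithin f D a -> 0 < eta ->
  (forall y, a - eta < y < a -> D y /\ f y <= m) -> f a <= m.
Proof.
  intros Hc He H. assert (- m <= - f a); [|lra].
  apply (left_ge (fun x => - f x) D a eta); auto. apply cwithin_opp; auto.
  intros y Hy. destruct (H y Hy). split; auto; lra.
Qed.

Lemma right_ge f D a eta m : cwithin f D a -> 0 < eta ->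
  (forall y, a < y < a + eta -> D y /\ m <= f y) -> m <= f a.
Proof.
  intros Hc He H. assert (- f a <= - m); [|lra].
  apply (right_le (fun x => - f x) D a eta); auto. apply cwithin_opp; auto.
  intros y Hy. destruct (H y Hy). split; auto; lra.
Qed.

Definition loD d0 X (u : R -> R) mu := supR (fun d => d0 <= d <= X /\ (d = d0 \/ mu < u d)).
Definition hiD d0 X (u : R -> R) mu := supR (fun d => d0 <= d <= X /\ (d = d0 \/ mu <= u d)).
Definition Dopt d0 (u : R -> R) mu d := d0 <= d /\ u d <= mu /\ (d = d0 \/ u d = mu).

Definition cons_ok d0 (u : R -> R) :=
  (forall a b, d0 <= a <= b -> u b <= u a) /\
  (forall x, d0 <= x -> cwithin u (fun y => d0 <= y) x).

Section Cons.
Variables (d0 X : R) (u : R -> R).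
Hypothesis HX : d0 <= X.
Hypothesis Hu : cons_ok d0 u.

Lemma lo_basic mu :
  d0 <= loD d0 X u mu <= X /\
  (forall d, d0 <= d <= X -> (d = d0 \/ mu < u d) -> d <= loD d0 X u mu) /\
  (forall y, y < loD d0 X u mu -> exists d, (d0 <= d <= X /\ (d = d0 \/ mu < u d)) /\ y < d).
Proof.
  destruct (supR_props (fun d => d0 <= d <= X /\ (d = d0 \/ mu < u d)) d0 X) as [A [B C]].
  - split; [lra| now left].
  - intros x [Hx _]; lra.
  - unfold loD. split; [split|split].
    + apply A. split; [lra|now left].
    + apply B. intros x [Hx _]; lra.
    + intros d Hd Hd'. apply A. auto.
    + exact C.
Qed.

Lemma hi_basic mu :
  d0 <= hiD d0 X u mu <= X /\
  (forall d, d0 <= d <= X -> (d = d0 \/ mu <= u d) -> d <= hiD d0 X u mu) /\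
  (forall y, y < hiD d0 X u mu -> exists d, (d0 <= d <= X /\ (d = d0 \/ mu <= u d)) /\ y < d) /\
  (forall y, (forall d, d0 <= d <= X -> (d = d0 \/ mu <= u d) -> d <= y) -> hiD d0 X u mu <= y).
Proof.
  destruct (supR_props (fun d => d0 <= d <= X /\ (d = d0 \/ mu <= u d)) d0 X) as [A [B C]].
  - split; [lra| now left].
  - intros x [Hx _]; lra.
  - unfold hiD. split; [split|split;[|split]].
    + apply A. split; [lra|now left].
    + apply B. intros x [Hx _]; lra.
    + intros d Hd Hd'. apply A. auto.
    + exact C.
    + intros y Hy. apply B. intros x [H1 H2]. auto.
Qed.

Lemma lo_opt mu : u X <= mu -> Dopt d0 u mu (loD d0 X u mu) /\
   (forall d, d0 <= d < loD d0 X u mu -> mu < u d).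
Proof.
  intros HuX. destruct Hu as [Hmon Hc].
  destruct (lo_basic mu) as [[L1 L2] [LA LB]].
  set (lo := loD d0 X u mu) in *.
  assert (Hbelow : forall d, d0 <= d < lo -> mu < u d).
  { intros d Hd. destruct (LB d) as [e [[He1 He2] He3]]; [lra|].
    destruct He2 as [He2|He2]; [lra|].
    assert (u e <= u d) by (apply Hmon; lra). lra. }
  split; [|exact Hbelow].
  split; [exact L1|split].
  - destruct (Req_dec lo X) as [E|E]; [rewrite E; exact HuX|].
    apply (right_le u (fun y => d0 <= y) lo (X - lo)); [apply Hc; lra|lra|].
    intros y Hy. split; [lra|].
    destruct (Rle_or_lt (u y) mu) as [h|h]; [exact h|].
    assert (y <= lo) by (apply LA; [lra|right; exact h]). lra.
  - destruct (Req_dec lo d0) as [E|E]; [left; exact E|right].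
    apply Rle_antisym.
    +
      destruct (Req_dec lo X) as [E2|E2]; [rewrite E2; exact HuX|].
      apply (right_le u (fun y => d0 <= y) lo (X - lo)); [apply Hc; lra|lra|].
      intros y Hy. split; [lra|].
      destruct (Rle_or_lt (u y) mu) as [h|h]; [exact h|].
      assert (y <= lo) by (apply LA; [lra|right; exact h]). lra.
    + apply (left_ge u (fun y => d0 <= y) lo (lo - d0)); [apply Hc; lra|lra|].
      intros y Hy. split; [lra|]. left. apply Hbelow. lra.
Qed.

Lemma hi_opt mu : u X <= mu -> Dopt d0 u mu (hiD d0 X u mu) /\
   (hiD d0 X u mu = d0 \/ mu <= u (hiD d0 X u mu)).
Proof.
  intros HuX. destruct Hu as [Hmon Hc].
  destruct (hi_basic mu) as [[L1 L2] [LA [LB LC]]].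
  set (hi := hiD d0 X u mu) in *.
  assert (Hle : u hi <= mu).
  { destruct (Req_dec hi X) as [E|E]; [rewrite E; exact HuX|].
    apply (right_le u (fun y => d0 <= y) hi (X - hi)); [apply Hc; lra|lra|].
    intros y Hy. split; [lra|].
    destruct (Rle_or_lt (u y) mu) as [h|h]; [exact h|].
    assert (y <= hi) by (apply LA; [lra|right; lra]). lra. }
  assert (Hge : hi = d0 \/ mu <= u hi).
  { destruct (Req_dec hi d0) as [E|E]; [left; exact E|right].
    apply (left_ge u (fun y => d0 <= y) hi (hi - d0)); [apply Hc; lra|lra|].
    intros y Hy. split; [lra|].
    destruct (LB y) as [e [[He1 He2] He3]]; [lra|].
    destruct He2 as [He2|He2]; [lra|].
    assert (u e <= u y) by (apply Hmon; lra). lra. }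
  split; [|exact Hge].
  split; [exact L1|split; [exact Hle|]].
  destruct Hge as [E|E]; [left; exact E| right; lra].
Qed.

Lemma lo_le_hi mu : u X <= mu -> loD d0 X u mu <= hiD d0 X u mu.
Proof.
  intros HuX. destruct (lo_opt mu HuX) as [[A [B C]] _].
  destruct (lo_basic mu) as [[L1 L2] _].
  destruct (hi_basic mu) as [[H1 H2] [HA _]].
  destruct C as [C|C]. rewrite C; lra.
  apply HA; [lra|right; lra].
Qed.

Lemma between_opt mu d : u X <= mu -> loD d0 X u mu <= d <= hiD d0 X u mu ->
  Dopt d0 u mu d.
Proof.
  intros HuX Hd. destruct Hu as [Hmon Hc].
  destruct (lo_opt mu HuX) as [[A [B C]] _].
  destruct (hi_opt mu HuX) as [[A2 [B2 C2]] _].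
  destruct (hi_basic mu) as [[H1 H2] _].
  split; [lra|split].
  - assert (u d <= u (loD d0 X u mu)) by (apply Hmon; lra). lra.
  - destruct (Req_dec d d0) as [E|E]; [left; exact E|right].
    destruct C2 as [C2|C2]; [lra|].
    assert (u d <= u (loD d0 X u mu)) by (apply Hmon; lra).
    assert (u (hiD d0 X u mu) <= u d) by (apply Hmon; lra). lra.
Qed.

Lemma hi_left ms eps : 0 < eps -> exists del, 0 < del /\
  forall mu, ms - del < mu <= ms -> - (hiD d0 X u ms) - eps <= - (hiD d0 X u mu).
Proof.
  intros He. destruct Hu as [Hmon Hc].
  destruct (hi_basic ms) as [[H1 H2] [HA _]].
  set (d := hiD d0 X u ms + eps).
  destruct (Rle_or_lt X d) as [hX|hX].
  - exists 1. split; [lra|]. intros mu _.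
    destruct (hi_basic mu) as [[K1 K2] _]. unfold d in *. lra.
  - assert (Hud : u d < ms).
    { destruct (Rle_or_lt ms (u d)) as [h|h]; [|exact h].
      assert (d <= hiD d0 X u ms) by (apply HA; [unfold d in *; lra|right; exact h]).
      unfold d in H; lra. }
    exists (ms - u d). split; [lra|]. intros mu Hmu.
    destruct (hi_basic mu) as [_ [_ [_ HC]]].
    assert (hiD d0 X u mu <= d).
    { apply HC. intros e He1 He2. destruct (Rle_or_lt e d) as [h|h]; [exact h|].
      destruct He2 as [He2|He2]; [unfold d in h; lra|].
      assert (u e <= u d) by (apply Hmon; unfold d in *; lra). lra. }
    unfold d in *. lra.
Qed.

Lemma hi_right ms eps : u X <= ms -> 0 < eps -> exists del, 0 < del /\
  forall mu, ms < mu < ms + del -> loD d0 X u ms - eps <= hiD d0 X u mu.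
Proof.
  intros HuX He. destruct Hu as [Hmon Hc].
  destruct (lo_basic ms) as [[L1 L2] [LA LB]].
  destruct (lo_opt ms HuX) as [_ Hbelow].
  set (d := loD d0 X u ms - eps).
  destruct (Rle_or_lt d d0) as [h0|h0].
  - exists 1. split; [lra|]. intros mu _.
    destruct (hi_basic mu) as [[K1 K2] _]. unfold d in *. lra.
  - assert (Hud : ms < u d) by (apply Hbelow; unfold d in *; lra).
    exists (u d - ms). split; [lra|]. intros mu Hmu.
    destruct (hi_basic mu) as [_ [HA _]].
    assert (d <= hiD d0 X u mu) by (apply HA; [unfold d in *; lra|right; lra]).
    unfold d in *. lra.
Qed.

Lemma hi_big mu : u d0 < mu -> hiD d0 X u mu <= d0.
Proof.
  intros Hm. destruct Hu as [Hmon Hc].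
  destruct (hi_basic mu) as [_ [_ [_ HC]]]. apply HC.
  intros e He1 He2. destruct He2 as [->|He2]; [lra|].
  assert (u e <= u d0) by (apply Hmon; lra). lra.
Qed.

Lemma hi_small mu : mu <= u X -> X <= hiD d0 X u mu.
Proof.
  intros Hm. destruct (hi_basic mu) as [_ [HA _]]. apply HA; [lra|right; exact Hm].
Qed.

End Cons.

Definition sloS k0 (c : R -> R) mu := supR (fun s => 0 <= s <= k0 /\ (s = 0 \/ c s < mu)).
Definition shiS k0 (c : R -> R) mu := supR (fun s => 0 <= s <= k0 /\ (s = 0 \/ c s <= mu)).
Definition Sopt k0 (c : R -> R) mu s := 0 <= s <= k0 /\ c s <= mu /\ (s = k0 \/ c s = mu).

Definition supp_ok (c : R -> R) :=
  (forall a b, a <= b -> c a <= c b) /\ (forall x, cwithin c (fun _ => True) x) /\ c 0 <= 0.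

Section Supp.
Variables (k0 : R) (c : R -> R).
Hypothesis Hk : 0 < k0.
Hypothesis Hc : supp_ok c.

Lemma gen_basic (Q : R -> Prop) :
  let s := supR (fun x => 0 <= x <= k0 /\ (x = 0 \/ Q x)) in
  0 <= s <= k0 /\
  (forall x, 0 <= x <= k0 -> (x = 0 \/ Q x) -> x <= s) /\
  (forall y, y < s -> exists x, (0 <= x <= k0 /\ (x = 0 \/ Q x)) /\ y < x) /\
  (forall y, (forall x, 0 <= x <= k0 -> (x = 0 \/ Q x) -> x <= y) -> s <= y).
Proof.
  destruct (supR_props (fun x => 0 <= x <= k0 /\ (x = 0 \/ Q x)) 0 k0) as [A [B C]].
  - split; [lra| now left].
  - intros x [Hx _]; lra.
  - split; [split|split;[|split]].
    + apply A. split; [lra|now left].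
    + apply B. intros x [Hx _]; lra.
    + intros d Hd Hd'. apply A. auto.
    + exact C.
    + intros y Hy. apply B. intros x [H1 H2]. auto.
Qed.

Lemma slo_opt mu : 0 < mu -> Sopt k0 c mu (sloS k0 c mu).
Proof.
  intros Hmu. destruct Hc as [Hmon [Hcont H0]].
  destruct (gen_basic (fun s => c s < mu)) as [[L1 L2] [LA [LB LC]]].
  fold (sloS k0 c mu) in *. set (lo := sloS k0 c mu) in *.
  split; [lra|split].
  - destruct (Req_dec lo 0) as [E|E]; [rewrite E; lra|].
    apply (left_le c (fun _ => True) lo lo); [apply Hcont|lra|].
    intros y Hy. split; [exact I|].
    destruct (LB y) as [e [[He1 He2] He3]]; [lra|].
    destruct He2 as [He2|He2]; [lra|].
    assert (c y <= c e) by (apply Hmon; lra). lra.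
  - destruct (Req_dec lo k0) as [E|E]; [left; exact E|right].
    apply Rle_antisym.
    + destruct (Req_dec lo 0) as [E2|E2]; [rewrite E2; lra|].
      apply (left_le c (fun _ => True) lo lo); [apply Hcont|lra|].
      intros y Hy. split; [exact I|].
      destruct (LB y) as [e [[He1 He2] He3]]; [lra|].
      destruct He2 as [He2|He2]; [lra|].
      assert (c y <= c e) by (apply Hmon; lra). lra.
    + apply (right_ge c (fun _ => True) lo (k0 - lo)); [apply Hcont|lra|].
      intros y Hy. split; [exact I|].
      destruct (Rle_or_lt mu (c y)) as [h|h]; [exact h|].
      assert (y <= lo) by (apply LA; [lra|right; exact h]). lra.
Qed.

Lemma shi_opt mu : 0 < mu -> Sopt k0 c mu (shiS k0 c mu).
Proof.
  intros Hmu. destruct Hc as [Hmon [Hcont H0]].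
  destruct (gen_basic (fun s => c s <= mu)) as [[L1 L2] [LA [LB LC]]].
  fold (shiS k0 c mu) in *. set (hi := shiS k0 c mu) in *.
  assert (Hle : c hi <= mu).
  { destruct (Req_dec hi 0) as [E|E]; [rewrite E; lra|].
    apply (left_le c (fun _ => True) hi hi); [apply Hcont|lra|].
    intros y Hy. split; [exact I|].
    destruct (LB y) as [e [[He1 He2] He3]]; [lra|].
    destruct He2 as [He2|He2]; [lra|].
    assert (c y <= c e) by (apply Hmon; lra). lra. }
  split; [lra|split; [exact Hle|]].
  destruct (Req_dec hi k0) as [E|E]; [left; exact E|right].
  apply Rle_antisym; [exact Hle|].
  apply (right_ge c (fun _ => True) hi (k0 - hi)); [apply Hcont|lra|].
  intros y Hy. split; [exact I|].
  destruct (Rle_or_lt mu (c y)) as [h|h]; [exact h|].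
  assert (y <= hi) by (apply LA; [lra|right; lra]). lra.
Qed.

Lemma slo_le_shi mu : 0 < mu -> sloS k0 c mu <= shiS k0 c mu.
Proof.
  intros Hmu. destruct (slo_opt mu Hmu) as [A [B C]].
  destruct (gen_basic (fun s => c s <= mu)) as [_ [LA _]].
  fold (shiS k0 c mu) in *. apply LA; [lra|right; exact B].
Qed.

Lemma betweenS mu s : 0 < mu -> sloS k0 c mu <= s <= shiS k0 c mu -> Sopt k0 c mu s.
Proof.
  intros Hmu Hs. destruct Hc as [Hmon _].
  destruct (slo_opt mu Hmu) as [A [B C]].
  destruct (shi_opt mu Hmu) as [A2 [B2 C2]].
  split; [lra|split].
  - assert (c s <= c (shiS k0 c mu)) by (apply Hmon; lra). lra.
  - destruct (Req_dec s k0) as [E|E]; [left; exact E|right].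
    destruct C as [C|C]; [lra|].
    assert (c s <= c (shiS k0 c mu)) by (apply Hmon; lra).
    assert (c (sloS k0 c mu) <= c s) by (apply Hmon; lra). lra.
Qed.

Lemma slo_left ms eps : 0 < eps -> exists del, 0 < del /\
  forall mu, ms - del < mu <= ms -> sloS k0 c ms - eps <= sloS k0 c mu.
Proof.
  intros He. destruct Hc as [Hmon _].
  destruct (gen_basic (fun s => c s < ms)) as [[L1 L2] [LA [LB LC]]].
  fold (sloS k0 c ms) in *.
  set (s := sloS k0 c ms - eps) in *.
  destruct (Rlt_or_le s 0) as [h0|h0].
  - exists 1. split; [lra|]. intros mu _.
    destruct (gen_basic (fun x => c x < mu)) as [[K1 K2] _].
    fold (sloS k0 c mu) in *. unfold s in *. lra.
  - destruct (LB s) as [e [[He1 He2] He3]]; [unfold s; lra|].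
    destruct He2 as [He2|He2]; [lra|].
    assert (c s <= c e) by (apply Hmon; lra).
    exists (ms - c s). split; [lra|]. intros mu Hmu.
    destruct (gen_basic (fun x => c x < mu)) as [_ [KA _]].
    fold (sloS k0 c mu) in *.
    apply KA; [unfold s in *; lra|right; lra].
Qed.

Lemma slo_right ms eps : 0 < eps -> exists del, 0 < del /\
  forall mu, ms < mu < ms + del -> - shiS k0 c ms - eps <= - sloS k0 c mu.
Proof.
  intros He. destruct Hc as [Hmon _].
  destruct (gen_basic (fun s => c s <= ms)) as [[L1 L2] [LA [LB LC]]].
  fold (shiS k0 c ms) in *.
  set (s := shiS k0 c ms + eps) in *.
  destruct (Rle_or_lt k0 s) as [h0|h0].
  - exists 1. split; [lra|]. intros mu _.
    destruct (gen_basic (fun x => c x < mu)) as [[K1 K2] _].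
    fold (sloS k0 c mu) in *. unfold s in *. lra.
  - assert (Hcs : ms < c s).
    { destruct (Rlt_or_le ms (c s)) as [h|h]; [exact h|].
      assert (s <= shiS k0 c ms) by (apply LA; [unfold s in *; lra|right; exact h]).
      unfold s in *; lra. }
    exists (c s - ms). split; [lra|]. intros mu Hmu.
    destruct (gen_basic (fun x => c x < mu)) as [_ [_ [_ KC]]].
    fold (sloS k0 c mu) in *.
    assert (sloS k0 c mu <= s).
    { apply KC. intros e He1 He2. destruct (Rle_or_lt e s) as [h|h]; [exact h|].
      destruct He2 as [He2|He2]; [unfold s in *; lra|].
      assert (c s <= c e) by (apply Hmon; lra). lra. }
    unfold s in *; lra.
Qed.

Lemma slo_big mu : c k0 < mu -> k0 <= sloS k0 c mu.
Proof.
  intros Hm. destruct (gen_basic (fun x => c x < mu)) as [_ [KA _]].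
  fold (sloS k0 c mu) in *. apply KA; [lra|right; exact Hm].
Qed.

Lemma slo_range mu : 0 <= sloS k0 c mu <= k0.
Proof.
  destruct (gen_basic (fun x => c x < mu)) as [K _]. exact K.
Qed.

End Supp.

Lemma cons_derive d0 (U : R -> R) :
  concave_on_Ici U d0 -> strict_incr_Ici U d0 -> C1_on_Ici U d0 ->
  exists u, cons_ok d0 u /\
    (forall d x, d0 <= d -> d0 <= x -> U x - U d <= u d * (x - d)) /\
    (forall x, d0 <= x -> 0 < u x).
Proof.
  intros Hconc Hinc [u [Hd Hcont]].
  assert (Hg : forall d x, d0 <= d -> d0 <= x -> U x - U d <= u d * (x - d)).
  { intros d x Hd0 Hx0.
    destruct (Req_dec x d) as [E|E]; [subst; lra|].
    apply seg_grad; [exact E| |].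
    - intros eps Heps.
      destruct (flim_eps _ _ _ _ (Hd d Hd0) eps Heps) as [del [Hdel H]].
      exists del. split; [exact Hdel|]. intros t Ht Hs.
      assert (Hne : t * (x - d) <> 0).
      { apply Rmult_integral_contrapositive; split; lra. }
      specialize (H (d + t * (x - d))).
      replace (d + t * (x - d) - d) with (t * (x - d)) in H by ring.
      apply H; [|exact Hs]. split; [|lra].
      destruct (Rle_or_lt d x); nra.
    - intros t Ht.
      specialize (Hconc x d t Hx0 Hd0 ltac:(lra)).
      replace (t * x + (1 - t) * d) with (d + t * (x - d)) in Hconc by ring. lra. }
  exists u. split; [split|split; [exact Hg|]].
  - intros a b Hab.
    pose proof (Hg a b ltac:(lra) ltac:(lra)).
    pose proof (Hg b a ltac:(lra) ltac:(lra)).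
    destruct (Req_dec a b) as [->|Ne]; [lra|].
    assert (0 <= (u a - u b) * (b - a)) by lra.
    destruct (Rle_or_lt (u b) (u a)) as [h|h]; [exact h|]. nra.
  - intros x Hx eps Heps.
    destruct (flim_eps _ _ _ _ (Hcont x Hx) eps Heps) as [del [Hdel H]].
    exists del. split; auto.
  - intros x Hx. pose proof (Hinc x (x + 1) Hx ltac:(lra)).
    pose proof (Hg x (x + 1) Hx ltac:(lra)). lra.
Qed.

Lemma supp_derive (C : R -> R) :
  convex_R C -> C1_R C -> (forall s, s <= 0 -> C s = 0) ->
  exists c, supp_ok c /\ (forall s x, c s * (x - s) <= C x - C s).
Proof.
  intros Hconv [c [Hd Hcont]] H0.
  assert (Hg : forall s x, c s * (x - s) <= C x - C s).
  { intros d x.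
    destruct (Req_dec x d) as [E|E]; [subst; lra|].
    assert (- C x - - C d <= - c d * (x - d)); [|lra].
    apply (seg_grad (fun z => - C z)); [exact E| |].
    - intros eps Heps.
      pose proof (proj1 (is_derive_Reals C d (c d)) (Hd d)) as Hl.
      destruct (Hl eps Heps) as [[del Hdel] H].
      exists del. split; [exact Hdel|]. intros t Ht Hs.
      assert (Hne : t * (x - d) <> 0).
      { apply Rmult_integral_contrapositive; split; lra. }
      specialize (H (t * (x - d)) Hne Hs). simpl in H.
      replace ((- C (d + t * (x - d)) - - C d) / (t * (x - d)) - - c d)
        with (- ((C (d + t * (x - d)) - C d) / (t * (x - d)) - c d)) by (field; split; lra).
      rewrite Rabs_Ropp. exact H.
    - intros t Ht.
      specialize (Hconv x d t ltac:(lra)).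
      replace (t * x + (1 - t) * d) with (d + t * (x - d)) in Hconv by ring. lra. }
  exists c. split; [|exact Hg].
  assert (Hmon : forall a b, a <= b -> c a <= c b).
  { intros a b Hab.
    pose proof (Hg a b). pose proof (Hg b a).
    destruct (Req_dec a b) as [->|Ne]; [lra|].
    assert (0 <= (c b - c a) * (b - a)) by lra.
    destruct (Rle_or_lt (c a) (c b)) as [h|h]; [exact h|]. nra. }
  assert (Hcw : forall x, cwithin c (fun _ => True) x).
  { intros x eps Heps. destruct (cont_eps c x (Hcont x) eps Heps) as [del [Hdel H]].
    exists del. split; auto. }
  split; [exact Hmon|split; [exact Hcw|]].
  apply (left_le c (fun _ => True) 0 1); [apply Hcw|lra|].
  intros y Hy. split; [exact I|].
  pose proof (Hg y 0). rewrite (H0 0), (H0 y) in H by lra. nra.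
Qed.

Lemma rsum_sub n f g a : rsum n (fun i => f i - a * g i) = rsum n f - a * rsum n g.
Proof. induction n; simpl; [ring|]. rewrite IHn. ring. Qed.

Lemma cons_best d0 (U u : R -> R) mu d :
  Dopt d0 u mu d ->
  (forall d x, d0 <= d -> d0 <= x -> U x - U d <= u d * (x - d)) ->
  forall x, d0 <= x -> U x - mu * x <= U d - mu * d.
Proof.
  intros [H1 [H2 H3]] Hg x Hx. pose proof (Hg d x H1 Hx).
  destruct H3 as [->|H3].
  - assert (u d0 * (x - d0) <= mu * (x - d0)) by (apply Rmult_le_compat_r; lra). lra.
  - rewrite H3 in H. lra.
Qed.

Lemma supp_best k0 (C c : R -> R) mu s :
  Sopt k0 c mu s ->
  (forall s x, c s * (x - s) <= C x - C s) ->
  forall x, x <= k0 -> mu * x - C x <= mu * s - C s.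
Proof.
  intros [H1 [H2 H3]] Hg x Hx. pose proof (Hg s x).
  destruct H3 as [->|H3].
  - assert (mu * (x - k0) <= c k0 * (x - k0)).
    { assert (0 <= (mu - c k0) * (k0 - x)) by (apply Rmult_le_pos; lra). nra. }
    lra.
  - rewrite H3 in H. lra.
Qed.

Lemma rsum_thd n f a m : rsum n (fun i => (f i - a) * m) = m * rsum n f - INR n * a * m.
Proof. induction n; simpl rsum; [simpl; ring|]. rewrite IHn, S_INR. ring. Qed.

Lemma rsum_ths n f a m : rsum n (fun i => (a - f i) * m) = INR n * a * m - m * rsum n f.
Proof. induction n; simpl rsum; [simpl; ring|]. rewrite IHn, S_INR. ring. Qed.

Lemma DemE d0 x m : 0 < m -> Dem d0 ((x - d0) * m) m = x.
Proof. intros. unfold Dem. field. lra. Qed.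

Lemma SupE k0 x m : 0 < m -> Sup k0 ((k0 - x) * m) m = x.
Proof. intros. unfold Sup. field. lra. Qed.

Lemma Dem_ge d0 th m : 0 <= th -> 0 < m -> d0 <= Dem d0 th m.
Proof.
  intros. unfold Dem. assert (0 <= th / m) by (unfold Rdiv; apply Rmult_le_pos; [lra|left; apply Rinv_0_lt_compat; lra]). lra.
Qed.

Lemma Sup_le k0 th m : 0 <= th -> 0 < m -> Sup k0 th m <= k0.
Proof.
  intros. unfold Sup. assert (0 <= th / m) by (unfold Rdiv; apply Rmult_le_pos; [lra|left; apply Rinv_0_lt_compat; lra]). lra.
Qed.

Theorem theorem1 (M N : nat) (d0 k0 : R) (U C : nat -> R -> R) :
  (0 < M)%nat -> (0 < N)%nat ->
  0 < d0 -> 0 < k0 -> INR M * d0 < INR N * k0 ->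
  (forall i, (i < M)%nat ->
     concave_on_Ici (U i) d0 /\ strict_incr_Ici (U i) d0 /\
     C1_on_Ici (U i) d0 /\ U i d0 = 0) ->
  (forall i, (i < N)%nat ->
     convex_R (C i) /\ strict_incr_Ici (C i) 0 /\ C1_R (C i) /\
     (forall s, 0 <= s -> 0 <= C i s) /\ (forall s, s <= 0 -> C i s = 0)) ->
  exists (thd ths : nat -> R) (mu : R),
    0 < mu /\
    (forall i, (i < M)%nat -> 0 <= thd i) /\
    (forall i, (i < N)%nat -> 0 <= ths i) /\
    (forall i, (i < M)%nat -> forall th, 0 <= th ->
        pay_d d0 (U i) th mu <= pay_d d0 (U i) (thd i) mu) /\
    (forall i, (i < N)%nat -> forall th, 0 <= th ->
        pay_s k0 (C i) th mu <= pay_s k0 (C i) (ths i) mu) /\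
    mu = (rsum M thd + rsum N ths) / (INR N * k0 - INR M * d0) /\
    (let dstar := fun i => Dem d0 (thd i) mu in
     let sstar := fun i => Sup k0 (ths i) mu in
     feasible M N d0 k0 dstar sstar /\
     forall d s, feasible M N d0 k0 d s ->
       welfare M N U C d s <= welfare M N U C dstar sstar).
Proof.
  intros HM HN Hd0 Hk0 HMN HU HC.
  destruct (choice_nat (fun i f => (i < M)%nat -> cons_ok d0 f /\
    (forall d x, d0 <= d -> d0 <= x -> U i x - U i d <= f d * (x - d)) /\
    (forall x, d0 <= x -> 0 < f x))) as [u Hu].
  { intros i. destruct (lt_dec i M) as [h|h].
    - destruct (HU i h) as [A [B [D _]]].
      destruct (cons_derive d0 (U i) A B D) as [f Hf]. exists f; auto.
    - exists (fun _ => 0). intros; lia. }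
  destruct (choice_nat (fun i f => (i < N)%nat -> supp_ok f /\
    (forall s x, f s * (x - s) <= C i x - C i s))) as [c Hc].
  { intros i. destruct (lt_dec i N) as [h|h].
    - destruct (HC i h) as [A [_ [D [_ E]]]].
      destruct (supp_derive (C i) A D E) as [f Hf]. exists f; auto.
    - exists (fun _ => 0). intros; lia. }
  set (X := d0 + INR N * k0 + 1).
  assert (HX : d0 <= X).
  { unfold X. assert (0 <= INR N) by apply pos_INR. nra. }
  assert (HXN : INR N * k0 < X) by (unfold X; lra).
  set (m0 := rmaxn M (fun i => u i X)).
  destruct (rmaxn_wit M (fun i => u i X) HM) as [i0 [Hi0 Ei0]].
  fold m0 in Ei0.
  assert (Hm0 : 0 < m0).
  { rewrite Ei0. destruct (Hu i0 Hi0) as [_ [_ P]]. apply P; lra. }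
  assert (HuX : forall i, (i < M)%nat -> u i X <= m0).
  { intros i Hi. apply (rmaxn_ge M (fun i => u i X)); exact Hi. }
  set (B := Rmax (rmaxn M (fun i => u i d0)) (rmaxn N (fun j => c j k0))).
  set (hiA := fun mu => rsum M (fun i => hiD d0 X (u i) mu)).
  set (sloA := fun mu => rsum N (fun j => sloS k0 (c j) mu)).
  set (S := fun mu => m0 <= mu /\ sloA mu <= hiA mu).
  assert (HS0 : S m0).
  { split; [lra|]. unfold sloA, hiA.
    assert (rsum N (fun j => sloS k0 (c j) m0) <= rsum N (fun _ => k0)).
    { apply rsum_le. intros j Hj. exact (proj2 (slo_range k0 (c j) Hk0 m0)). }
    rewrite rsum_const in H.
    assert (hiD d0 X (u i0) m0 <= rsum M (fun i => hiD d0 X (u i) m0)).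
    { apply (rsum_ge_term M (fun i => hiD d0 X (u i) m0)); [exact Hi0|].
      intros j Hj. destruct (Hu j Hj) as [Hok _].
      destruct (hi_basic d0 X (u j) HX m0) as [[K _] _]. lra. }
    assert (X <= hiD d0 X (u i0) m0).
    { apply hi_small; [exact HX|]. lra. }
    lra. }
  assert (HSB : forall mu, S mu -> mu <= B).
  { intros mu [_ Hmu]. destruct (Rle_or_lt mu B) as [h|h]; [exact h|exfalso].
    assert (hiA mu <= rsum M (fun _ => d0)).
    { apply rsum_le. intros i Hi. destruct (Hu i Hi) as [Hok _].
      apply hi_big; auto.
      assert (u i d0 <= rmaxn M (fun i => u i d0)) by (apply (rmaxn_ge M (fun i => u i d0)); exact Hi).
      assert (rmaxn M (fun i => u i d0) <= B) by apply Rmax_l. lra. }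
    assert (rsum N (fun _ => k0) <= sloA mu).
    { apply rsum_le. intros j Hj. destruct (Hc j Hj) as [Hok _].
      apply slo_big; auto.
      assert (c j k0 <= rmaxn N (fun j => c j k0)) by (apply (rmaxn_ge N (fun j => c j k0)); exact Hj).
      assert (rmaxn N (fun j => c j k0) <= B) by apply Rmax_r. lra. }
    rewrite rsum_const in H, H0. lra. }
  destruct (supR_props S m0 B HS0 HSB) as [SA [SB SC]].
  set (ms := supR S) in *.
  assert (Hms0 : m0 <= ms) by (apply SA; exact HS0).
  assert (Hms : 0 < ms) by lra.
  assert (HuXs : forall i, (i < M)%nat -> u i X <= ms).
  { intros i Hi. specialize (HuX i Hi). lra. }
  set (loA := rsum M (fun i => loD d0 X (u i) ms)).
  set (shiA := rsum N (fun j => shiS k0 (c j) ms)).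
  assert (HA : sloA ms <= hiA ms).
  { destruct (Rle_or_lt (sloA ms) (hiA ms)) as [h|h]; [exact h|exfalso].
    set (g := sloA ms - hiA ms).
    assert (Hg : 0 < g) by (unfold g; lra).
    destruct (agg M (fun i mu => - hiD d0 X (u i) mu) (fun i => - hiD d0 X (u i) ms)
       (fun del mu => ms - del < mu <= ms)) with (eps := g / 3) as [d1 [Hd1 H1]].
    { intros a b mu Hab Hm. lra. }
    { intros i Hi eps Heps. destruct (Hu i Hi) as [Hok _].
      destruct (hi_left d0 X (u i) HX Hok ms eps Heps) as [del [Hdel P]].
      exists del; split; auto. }
    { lra. }
    destruct (agg N (fun j mu => sloS k0 (c j) mu) (fun j => sloS k0 (c j) ms)
       (fun del mu => ms - del < mu <= ms)) with (eps := g / 3) as [d2 [Hd2 H2]].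
    { intros a b mu Hab Hm. lra. }
    { intros j Hj eps Heps. destruct (Hc j Hj) as [Hok _].
      destruct (slo_left k0 (c j) Hk0 Hok ms eps Heps) as [del [Hdel P]].
      exists del; split; auto. }
    { lra. }
    assert (Hmin : 0 < Rmin d1 d2) by (apply Rmin_glb_lt; lra).
    destruct (SC (ms - Rmin d1 d2)) as [mu [[Hm0mu Hmu] Hlt]]; [lra|].
    assert (Hle : mu <= ms) by (apply SA; split; assumption).
    assert (Rmin d1 d2 <= d1) by apply Rmin_l.
    assert (Rmin d1 d2 <= d2) by apply Rmin_r.
    specialize (H1 mu ltac:(lra)). specialize (H2 mu ltac:(lra)).
    rewrite (rsum_opp M (fun i => hiD d0 X (u i) ms)) in H1.
    rewrite (rsum_opp M (fun i => hiD d0 X (u i) mu)) in H1.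
    unfold g, hiA, sloA in *; cbv beta in *. lra. }
  assert (HB : loA <= shiA).
  { destruct (Rle_or_lt loA shiA) as [h|h]; [exact h|exfalso].
    set (g := loA - shiA).
    assert (Hg : 0 < g) by (unfold g; lra).
    destruct (agg M (fun i mu => hiD d0 X (u i) mu) (fun i => loD d0 X (u i) ms)
       (fun del mu => ms < mu < ms + del)) with (eps := g / 3) as [d1 [Hd1 H1]].
    { intros a b mu Hab Hm. lra. }
    { intros i Hi eps Heps. destruct (Hu i Hi) as [Hok _].
      destruct (hi_right d0 X (u i) HX Hok ms eps (HuXs i Hi) Heps) as [del [Hdel P]].
      exists del; split; auto. }
    { lra. }
    destruct (agg N (fun j mu => - sloS k0 (c j) mu) (fun j => - shiS k0 (c j) ms)
       (fun del mu => ms < mu < ms + del)) with (eps := g / 3) as [d2 [Hd2 H2]].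
    { intros a b mu Hab Hm. lra. }
    { intros j Hj eps Heps. destruct (Hc j Hj) as [Hok _].
      destruct (slo_right k0 (c j) Hk0 Hok ms eps Heps) as [del [Hdel P]].
      exists del; split; auto. }
    { lra. }
    assert (Hmin : 0 < Rmin d1 d2) by (apply Rmin_glb_lt; lra).
    assert (Rmin d1 d2 <= d1) by apply Rmin_l.
    assert (Rmin d1 d2 <= d2) by apply Rmin_r.
    set (mu := ms + Rmin d1 d2 / 2).
    specialize (H1 mu ltac:(unfold mu; lra)). specialize (H2 mu ltac:(unfold mu; lra)).
    rewrite (rsum_opp N (fun j => shiS k0 (c j) ms)) in H2.
    rewrite (rsum_opp N (fun j => sloS k0 (c j) mu)) in H2.
    assert (S mu).
    { split; [unfold mu; lra|]. unfold g, hiA, sloA, loA, shiA in *; cbv beta in *. lra. }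
    specialize (SA mu H3). unfold mu in SA. lra. }
  assert (Hlam : exists l, 0 <= l <= 1 /\ (loA - shiA) + l * ((hiA ms - sloA ms) - (loA - shiA)) = 0).
  { destruct (Req_dec (hiA ms - sloA ms - (loA - shiA)) 0) as [E|E].
    - exists 0. split; lra.
    - set (D := hiA ms - sloA ms - (loA - shiA)) in *.
      assert (HD : 0 < D) by (unfold D in *; lra).
      exists (- (loA - shiA) / D).
      assert (Hm : - (loA - shiA) / D * D = - (loA - shiA)) by (field; lra).
      split; [|lra]. split.
      + unfold Rdiv; apply Rmult_le_pos; [lra|left; apply Rinv_0_lt_compat; lra].
      + destruct (Rle_or_lt (- (loA - shiA) / D) 1) as [h|h]; [exact h|].
        unfold D in *. nra. }
  destruct Hlam as [l [Hl Hsum]].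
  set (d := fun i => loD d0 X (u i) ms + l * (hiD d0 X (u i) ms - loD d0 X (u i) ms)).
  set (s := fun j => shiS k0 (c j) ms + l * (sloS k0 (c j) ms - shiS k0 (c j) ms)).
  assert (Hdopt : forall i, (i < M)%nat -> Dopt d0 (u i) ms (d i)).
  { intros i Hi. destruct (Hu i Hi) as [Hok _].
    pose proof (lo_le_hi d0 X (u i) HX Hok ms (HuXs i Hi)).
    apply (between_opt d0 X (u i) HX Hok ms (d i) (HuXs i Hi)).
    unfold d. split; nra. }
  assert (Hsopt : forall j, (j < N)%nat -> Sopt k0 (c j) ms (s j)).
  { intros j Hj. destruct (Hc j Hj) as [Hok _].
    pose proof (slo_le_shi k0 (c j) Hk0 Hok ms Hms).
    apply (betweenS k0 (c j) Hk0 Hok ms (s j) Hms).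
    unfold s. split; nra. }
  assert (Hclear : rsum M d = rsum N s).
  { pose proof (rsum_lin M (fun i => loD d0 X (u i) ms) (fun i => hiD d0 X (u i) ms) l) as E1.
    pose proof (rsum_lin N (fun j => shiS k0 (c j) ms) (fun j => sloS k0 (c j) ms) l) as E2.
    cbv beta in E1, E2. unfold d, s. rewrite E1, E2.
    unfold loA, shiA, hiA, sloA in *. cbv beta in *. lra. }
  exists (fun i => (d i - d0) * ms), (fun j => (k0 - s j) * ms), ms.
  split; [exact Hms|].
  split.
  { intros i Hi. destruct (Hdopt i Hi) as [A _]. apply Rmult_le_pos; lra. }
  split.
  { intros j Hj. destruct (Hsopt j Hj) as [A _]. apply Rmult_le_pos; lra. }
  split.
  { intros i Hi th Hth. unfold pay_d. rewrite DemE by exact Hms.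
    destruct (Hu i Hi) as [_ [Hg _]].
    apply (cons_best d0 (U i) (u i) ms (d i) (Hdopt i Hi) Hg).
    apply Dem_ge; lra. }
  split.
  { intros j Hj th Hth. unfold pay_s. rewrite SupE by exact Hms.
    destruct (Hc j Hj) as [_ Hg].
    apply (supp_best k0 (C j) (c j) ms (s j) (Hsopt j Hj) Hg).
    apply Sup_le; lra. }
  split.
  { rewrite rsum_thd, rsum_ths, Hclear. field. lra. }
  intros dstar sstar.
  assert (Ed : forall i, dstar i = d i) by (intros i; unfold dstar; apply DemE; exact Hms).
  assert (Es : forall j, sstar j = s j) by (intros j; unfold sstar; apply SupE; exact Hms).
  assert (Hcl2 : rsum M dstar = rsum N sstar).
  { rewrite (rsum_ext M dstar d) by (intros; apply Ed).
    rewrite (rsum_ext N sstar s) by (intros; apply Es). exact Hclear. }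
  split.
  { split; [exact Hcl2|split].
    - intros j Hj. rewrite Es. destruct (Hsopt j Hj) as [A _]. exact A.
    - intros i Hi. rewrite Ed. destruct (Hdopt i Hi) as [A _]. exact A. }
  intros d' s' [Hf1 [Hf2 Hf3]]. unfold welfare.
  assert (H1 : rsum M (fun i => U i (d' i) - ms * d' i) <= rsum M (fun i => U i (dstar i) - ms * dstar i)).
  { apply rsum_le. intros i Hi. rewrite Ed. destruct (Hu i Hi) as [_ [Hg _]].
    apply (cons_best d0 (U i) (u i) ms (d i) (Hdopt i Hi) Hg). apply Hf3; exact Hi. }
  assert (H2 : rsum N (fun j => C j (sstar j) - ms * sstar j) <= rsum N (fun j => C j (s' j) - ms * s' j)).
  { apply rsum_le. intros j Hj. rewrite Es. destruct (Hc j Hj) as [_ Hg].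
    pose proof (supp_best k0 (C j) (c j) ms (s j) (Hsopt j Hj) Hg (s' j) ltac:(destruct (Hf2 j Hj); lra)).
    lra. }
  rewrite !(rsum_sub M) in H1. rewrite !(rsum_sub N) in H2.
  rewrite Hf1, Hcl2 in H1.
  clearbody dstar sstar. lra.
Qed.
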